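(* Let $a,b,d,f,c\in\mathbb{C}$ with $|af|\neq|bd|$, and let $M=\max\{M_1,M_2\}$ where, with $\Delta=|af|-|bd|$, $K_1=\left(\frac{|b|+|f|}{|\Delta|}\right)^2$, $K_2=\left(\frac{|a|+|d|}{|\Delta|}\right)^2$, $M_1=K_1+\sqrt{K_1(K_1+|c|)}$, $M_2=K_2+\sqrt{K_2(K_2+|c|)}$. Then $M$ is an escape radius for the system: for any orbit $(z_1(n),z_2(n))$ of the system, if $\max\{|z_1(n_0)|,|z_2(n_0)|\}>M$ for some $n_0\ge0$, then $\max\{|z_1(n)|,|z_2(n)|\}\to\infty$ as $n\to\infty$ (indeed $\max\{|z_1(n_0+k)|,|z_2(n_0+k)|\}>2^kM$ for all $k\ge0$).
   Context: The 2D coupled quadratic system with connectivity matrix $A=\begin{pmatrix}a&b\\ d&f\end{pmatrix}$ and parameter $c\in\mathbb{C}$ is the iteration $z_1(n+1)=(az_1(n)+bz_2(n))^2+c$, $z_2(n+1)=(dz_1(n)+fz_2(n))^2+c$, $n\ge 0$, from an initial condition $(z_1(0),z_2(0))\in\mathbb{C}^2$. *)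

(* Defs.v *)
From Stdlib Require Import Reals.
From Coquelicot Require Import Coquelicot.
Open Scope R_scope.

Fixpoint orbit (a b d f c z1 z2 : C) (n : nat) : C * C :=
  match n with
  | O => (z1, z2)
  | S m =>
      let p := orbit a b d f c z1 z2 m in
      let u := Cplus (Cmult a (fst p)) (Cmult b (snd p)) in
      let v := Cplus (Cmult d (fst p)) (Cmult f (snd p)) in
      (Cplus (Cmult u u) c, Cplus (Cmult v v) c)
  end.

Definition orbit_norm (a b d f c z1 z2 : C) (n : nat) : R :=
  Rmax (Cmod (fst (orbit a b d f c z1 z2 n))) (Cmod (snd (orbit a b d f c z1 z2 n))).

Definition Delta (a b d f : C) : R := Cmod (Cmult a f) - Cmod (Cmult b d).
Definition K1 (a b d f : C) : R := ((Cmod b + Cmod f) / Rabs (Delta a b d f)) ^ 2.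
Definition K2 (a b d f : C) : R := ((Cmod a + Cmod d) / Rabs (Delta a b d f)) ^ 2.
Definition M1 (a b d f c : C) : R :=
  K1 a b d f + sqrt (K1 a b d f * (K1 a b d f + Cmod c)).
Definition M2 (a b d f c : C) : R :=
  K2 a b d f + sqrt (K2 a b d f * (K2 a b d f + Cmod c)).
Definition escM (a b d f c : C) : R := Rmax (M1 a b d f c) (M2 a b d f c).

(* Main.v *)
Require Import Defs.
From Stdlib Require Import Reals Lra Psatz.
From Coquelicot Require Import Coquelicot.
Open Scope R_scope.

Lemma key_real (m K s c W : R) : 0 <= K -> 0 <= s -> s*s = K*(K+c) ->
  m > K + s -> m*m <= K*(W*W) -> W*W - c > 2*m.
Proof.
  intros HK Hs Hss Hm Hmw.
  assert (H1 : m*m - 2*K*m - K*c > 0) by nra.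
  assert (H2 : K*(W*W - c - 2*m) > 0) by nra.
  destruct (Rle_or_lt (W*W - c - 2*m) 0) as [H|H]; [|lra].
  assert (K*(W*W - c - 2*m) <= 0) by nra. lra.
Qed.

Lemma Cmod_sq_lb (u c : C) : Cmod (Cplus (Cmult u u) c) >= Cmod u * Cmod u - Cmod c.
Proof.
  assert (E : Cmult u u = Cplus (Cplus (Cmult u u) c) (Copp c)).
  { destruct u, c; apply injective_projections; simpl; ring. }
  pose proof (Cmod_triangle (Cplus (Cmult u u) c) (Copp c)).
  rewrite <- E, Cmod_mult, Cmod_opp in H. lra.
Qed.

Lemma Delta_le (a b d f : C) :
  Rabs (Defs.Delta a b d f) <= Cmod (Cminus (Cmult a f) (Cmult b d)).
Proof.
  unfold Defs.Delta.
  pose proof (Cmod_triangle (Cminus (Cmult a f) (Cmult b d)) (Cmult b d)) as H1.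
  pose proof (Cmod_triangle (Copp (Cminus (Cmult a f) (Cmult b d))) (Cmult a f)) as H2.
  rewrite Cmod_opp in H2.
  assert (E1 : Cplus (Cminus (Cmult a f) (Cmult b d)) (Cmult b d) = Cmult a f).
  { destruct a, b, d, f; apply injective_projections; simpl; ring. }
  assert (E2 : Cplus (Copp (Cminus (Cmult a f) (Cmult b d))) (Cmult a f) = Cmult b d).
  { destruct a, b, d, f; apply injective_projections; simpl; ring. }
  rewrite E1 in H1. rewrite E2 in H2.
  apply Rabs_le; lra.
Qed.

Lemma bound_lin (det z p q u v : C) (W : R) :
  Cmult det z = Cminus (Cmult p u) (Cmult q v) ->
  Cmod u <= W -> Cmod v <= W ->
  Cmod det * Cmod z <= (Cmod p + Cmod q) * W.
Proof.
  intros E Hu Hv. rewrite <- Cmod_mult, E.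
  unfold Cminus. eapply Rle_trans; [apply Cmod_triangle|].
  rewrite Cmod_opp, !Cmod_mult.
  pose proof (Cmod_ge_0 p). pose proof (Cmod_ge_0 q). nra.
Qed.

Lemma step (a b d f c z1 z2 : C) (n : nat) :
  Cmod (Cmult a f) <> Cmod (Cmult b d) ->
  orbit_norm a b d f c z1 z2 n > escM a b d f c ->
  orbit_norm a b d f c z1 z2 (S n) > 2 * orbit_norm a b d f c z1 z2 n.
Proof.
  intros Hne Hgt.
  unfold orbit_norm in *. simpl.
  set (x := fst (orbit a b d f c z1 z2 n)) in *.
  set (y := snd (orbit a b d f c z1 z2 n)) in *.
  set (u := Cplus (Cmult a x) (Cmult b y)).
  set (v := Cplus (Cmult d x) (Cmult f y)).
  set (det := Cminus (Cmult a f) (Cmult b d)).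
  set (W := Rmax (Cmod u) (Cmod v)).
  assert (HD : 0 < Rabs (Defs.Delta a b d f)).
  { apply Rabs_pos_lt. unfold Defs.Delta. lra. }
  assert (HDd := Delta_le a b d f). fold det in HDd.
  assert (Hu : Cmod u <= W) by apply Rmax_l.
  assert (Hv : Cmod v <= W) by apply Rmax_r.
  assert (HW0 : 0 <= W) by (pose proof (Cmod_ge_0 u); lra).
  assert (Hx : Rabs (Defs.Delta a b d f) * Cmod x <= (Cmod f + Cmod b) * W).
  { eapply Rle_trans; [|apply (bound_lin det x f b u v W)]; auto.
    - pose proof (Cmod_ge_0 x). nra.
    - unfold det, u, v; destruct a, b, d, f, x, y; apply injective_projections; simpl; ring. }
  assert (Hy : Rabs (Defs.Delta a b d f) * Cmod y <= (Cmod a + Cmod d) * W).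
  { eapply Rle_trans; [|apply (bound_lin det y a d v u W)]; auto.
    - pose proof (Cmod_ge_0 y). nra.
    - unfold det, u, v; destruct a, b, d, f, x, y; apply injective_projections; simpl; ring. }
  assert (Hnew : Rmax (Cmod (Cplus (Cmult u u) c)) (Cmod (Cplus (Cmult v v) c)) >= W*W - Cmod c).
  { pose proof (Cmod_sq_lb u c). pose proof (Cmod_sq_lb v c).
    pose proof (Rmax_l (Cmod (Cplus (Cmult u u) c)) (Cmod (Cplus (Cmult v v) c))).
    pose proof (Rmax_r (Cmod (Cplus (Cmult u u) c)) (Cmod (Cplus (Cmult v v) c))).
    unfold W. destruct (Rle_dec (Cmod u) (Cmod v)).
    - rewrite (Rmax_right (Cmod u) (Cmod v)) by lra. nra.
    - rewrite (Rmax_left (Cmod u) (Cmod v)) by lra. nra. }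
  unfold escM, M1, M2 in Hgt.
  assert (HK1 : 0 <= K1 a b d f) by (unfold K1; apply pow2_ge_0).
  assert (HK2 : 0 <= K2 a b d f) by (unfold K2; apply pow2_ge_0).
  pose proof (Cmod_ge_0 c) as Hc.
  assert (S1 : sqrt (K1 a b d f * (K1 a b d f + Cmod c)) * sqrt (K1 a b d f * (K1 a b d f + Cmod c)) = K1 a b d f * (K1 a b d f + Cmod c)).
  { apply sqrt_sqrt. nra. }
  assert (S2 : sqrt (K2 a b d f * (K2 a b d f + Cmod c)) * sqrt (K2 a b d f * (K2 a b d f + Cmod c)) = K2 a b d f * (K2 a b d f + Cmod c)).
  { apply sqrt_sqrt. nra. }
  pose proof (sqrt_pos (K1 a b d f * (K1 a b d f + Cmod c))).
  pose proof (sqrt_pos (K2 a b d f * (K2 a b d f + Cmod c))).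
  pose proof (Rmax_l (K1 a b d f + sqrt (K1 a b d f * (K1 a b d f + Cmod c)))
                     (K2 a b d f + sqrt (K2 a b d f * (K2 a b d f + Cmod c)))).
  pose proof (Rmax_r (K1 a b d f + sqrt (K1 a b d f * (K1 a b d f + Cmod c)))
                     (K2 a b d f + sqrt (K2 a b d f * (K2 a b d f + Cmod c)))).
  set (D := Rabs (Defs.Delta a b d f)) in *.
  destruct (Rle_dec (Cmod y) (Cmod x)).
  - rewrite (Rmax_left (Cmod x) (Cmod y)) in Hgt |- * by lra.
    assert (Hm : Cmod x * Cmod x <= K1 a b d f * (W*W)).
    { unfold K1. fold D.
      assert (Cmod x <= (Cmod b + Cmod f)/D * W).
      { unfold Rdiv. apply (Rmult_le_reg_l D); auto.
        replace (D * ((Cmod b + Cmod f) * / D * W)) with ((Cmod f + Cmod b) * W)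
          by (field; lra). auto. }
      pose proof (Cmod_ge_0 x). simpl. nra. }
    pose proof (key_real (Cmod x) (K1 a b d f) _ (Cmod c) W HK1 H S1 ltac:(lra) Hm).
    lra.
  - rewrite (Rmax_right (Cmod x) (Cmod y)) in Hgt |- * by lra.
    assert (Hm : Cmod y * Cmod y <= K2 a b d f * (W*W)).
    { unfold K2. fold D.
      assert (Cmod y <= (Cmod a + Cmod d)/D * W).
      { unfold Rdiv. apply (Rmult_le_reg_l D); auto.
        replace (D * ((Cmod a + Cmod d) * / D * W)) with ((Cmod a + Cmod d) * W)
          by (field; lra). auto. }
      pose proof (Cmod_ge_0 y). simpl. nra. }
    pose proof (key_real (Cmod y) (K2 a b d f) _ (Cmod c) W HK2 H0 S2 ltac:(lra) Hm).
    lra.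
Qed.

Theorem mainTheorem2 (a b d f c z1 z2 : C) (n0 : nat) :
  Cmod (Cmult a f) <> Cmod (Cmult b d) ->
  orbit_norm a b d f c z1 z2 n0 > escM a b d f c ->
  is_lim_seq (fun n => orbit_norm a b d f c z1 z2 n) p_infty /\
  (forall k : nat, orbit_norm a b d f c z1 z2 (n0 + k) > 2 ^ k * escM a b d f c).
Proof.
  intros Hne Hgt.
  set (N := orbit_norm a b d f c z1 z2) in *.
  assert (HM0 : 0 <= escM a b d f c).
  { unfold escM, M1. eapply Rle_trans; [|apply Rmax_l].
    pose proof (sqrt_pos (K1 a b d f * (K1 a b d f + Cmod c))).
    assert (0 <= K1 a b d f) by (unfold K1; apply pow2_ge_0). lra. }
  assert (G : forall k, N (n0 + k)%nat >= 2 ^ k * N n0).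
  { induction k.
    - rewrite Nat.add_0_r. simpl. lra.
    - assert (N (n0 + k)%nat > escM a b d f c).
      { pose proof (pow_le 2 k ltac:(lra)). assert (1 <= 2 ^ k) by (apply pow_R1_Rle; lra).
        nra. }
      pose proof (step a b d f c z1 z2 (n0 + k) Hne H).
      replace (n0 + S k)%nat with (S (n0 + k)) by lia. fold N in H0.
      simpl. lra. }
  split.
  - apply (is_lim_seq_incr_n _ n0).
    apply is_lim_seq_le_p_loc with (u := fun n => N n0 * 2 ^ n).
    + exists O. intros n _. rewrite Nat.add_comm. specialize (G n). lra.
    + replace p_infty with (Rbar_mult (N n0) p_infty).
      * apply is_lim_seq_scal_l. apply is_lim_seq_geom_p. lra.
      * simpl. destruct (Rle_dec 0 (N n0)); [|lra].
        destruct (Rle_lt_or_eq_dec 0 (N n0) r); [reflexivity|lra].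
  - intros k. specialize (G k). pose proof (pow_lt 2 k ltac:(lra)). nra.
Qed.
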